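(* Let $F$ be a field, $n$ a positive integer, and let $S\subseteq M_n(F)$ be a Clifford semigroup (under matrix multiplication) in which every matrix has rank $1$. Then $S$ is a commutative group, and for every matrix in $S$ all of its eigenvalues (in an algebraic closure of $F$) lie in $F$.
   Context: $M_n(F)$ denotes the set of $n\times n$ matrices over $F$. A Clifford semigroup is a completely regular inverse semigroup (equivalently, a regular semigroup whose idempotents are central). *)

(* Defs.v *)
From HB Require Import structures.
From mathcomp Require Import all_boot all_order all_algebra.
Set Implicit Arguments. Unset Strict Implicit. Unset Printing Implicit Defensive.
Import GRing.Theory.
Local Open Scope ring_scope.

Section Clifford.
Variables (F : fieldType) (n : nat).
Implicit Types (S : 'M[F]_n -> Prop).

Definition mx_semigroup S :=
  (exists A, S A) /\ (forall A B, S A -> S B -> S (A *m B)).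

Definition mx_regular S :=
  forall A, S A -> exists X, S X /\ A *m X *m A = A.

Definition mx_idempotents_central S :=
  forall E, S E -> E *m E = E -> forall A, S A -> E *m A = A *m E.

Definition mx_clifford_semigroup S :=
  [/\ mx_semigroup S, mx_regular S & mx_idempotents_central S].

Definition mx_commutative_group S :=
  exists E, [/\ S E,
    (forall A, S A -> E *m A = A /\ A *m E = A),
    (forall A, S A -> exists B, [/\ S B, A *m B = E & B *m A = E]) &
    (forall A B, S A -> S B -> A *m B = B *m A)].
End Clifford.

(* Main.v *)
Require Import Defs.
From HB Require Import structures.
From mathcomp Require Import all_boot all_order all_algebra.
Import GRing.Theory.
Local Open Scope ring_scope.

Lemma rank1_fact (F : fieldType) (n : nat) (A : 'M[F]_n) :
  \rank A = 1%N -> exists (C : 'M[F]_(n,1)) (R : 'M[F]_(1,n)), A = C *m R.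
Proof.
move=> hr; move: (col_base A) (row_base A) (mulmx_base A).
rewrite hr => C R <-; by exists C, R.
Qed.

Lemma rank1_sandwich (F : fieldType) (n : nat) (A M : 'M[F]_n) :
  \rank A = 1%N -> exists c : F, A *m M *m A = c *: A.
Proof.
move=> /rank1_fact [C [R ->]].
exists ((R *m M *m C) 0 0).
have -> : C *m R *m M *m (C *m R) = C *m (R *m M *m C) *m R by rewrite !mulmxA.
by rewrite {1}(mx11_scalar (R *m M *m C)) mul_mx_scalar scalemxAl.
Qed.

Theorem corollary2p4 (F : fieldType) (n : nat) (S : 'M[F]_n -> Prop) :
  (0 < n)%N ->
  mx_clifford_semigroup S ->
  (forall A, S A -> \rank A = 1%N) ->
  mx_commutative_group S /\
  (forall A, S A ->
     forall (L : closedFieldType) (f : {rmorphism F -> L}) (x : L),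
       eigenvalue (map_mx f A) x -> exists y : F, x = f y).
Proof.
move=> n0 [[[A0 SA0] Smul] Sreg Scent] Srk.
split; last first.
  move=> A SA L f x /eigenvalueP [w Hw w0].
  have [C [R eA]] := @rank1_fact _ _ _ (Srk A SA).
  move: Hw; rewrite eA map_mxM.
  set C' := map_mx f C; set R' := map_mx f R.
  rewrite mulmxA (mx11_scalar (w *m C')) mul_scalar_mx => Hw.
  have : (w *m C') 0 0 * (R' *m C') 0 0 = x * (w *m C') 0 0.
    have := congr1 (fun M => (M *m C') 0 0) Hw => /=.
    by rewrite -!scalemxAl !mxE.
  have [s0|s0] := eqVneq ((w *m C') 0 0) 0.
    move=> _; exists 0; rewrite rmorph0.
    move: Hw; rewrite s0 scale0r => /esym /eqP; rewrite scalemx_eq0 (negbTE w0) orbF.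
    by move/eqP.
  rewrite mulrC => /(mulIf s0) <-.
  exists ((R *m C) 0 0); rewrite /R' /C' -map_mxM mxE //.
have nz : forall P, S P -> P != 0.
  move=> P SP; apply/eqP => P0; have := Srk P SP; by rewrite P0 mxrank0.
have idem_le : forall P Q, S P -> P *m P = P -> S Q -> Q *m Q = Q -> P *m Q = P.
  move=> P Q SP PP SQ QQ.
  have SG := Smul P Q SP SQ.
  have QP : Q *m P = P *m Q by rewrite (Scent P SP PP Q SQ).
  have GP : P *m (P *m Q) *m P = P *m Q.
    by rewrite mulmxA PP -mulmxA QP mulmxA PP.
  have [c Hc] := @rank1_sandwich _ _ P (P *m Q) (Srk P SP).
  rewrite GP in Hc.
  have GG : (P *m Q) *m (P *m Q) = P *m Q.
    by rewrite -mulmxA (mulmxA Q) QP -!mulmxA QQ mulmxA PP.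
  move: GG; rewrite Hc -scalemxAl -scalemxAr PP scalerA => /eqP.
  rewrite -subr_eq0 -scalerBl scalemx_eq0 (negbTE (nz P SP)) orbF.
  move=> cc; have : c * (c - 1) == 0 by rewrite mulrBr mulr1.
  rewrite mulf_eq0 subr_eq0 => /orP [/eqP c0|/eqP c1].
    by have := Srk (P *m Q) SG; rewrite Hc c0 scale0r mxrank0.
  by rewrite c1 scale1r.
have idem_eq : forall P Q, S P -> P *m P = P -> S Q -> Q *m Q = Q -> P = Q.
  move=> P Q SP PP SQ QQ.
  by rewrite -(idem_le P Q) // (Scent P SP PP Q SQ) idem_le.
have [X0 [SX0 HX0]] := Sreg A0 SA0.
set E := A0 *m X0.
have SE : S E by apply: Smul.
have EE : E *m E = E by rewrite /E mulmxA HX0.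
have key : forall A, S A -> exists X, [/\ S X, A *m X = E, X *m A = E & A *m X *m A = A].
  move=> A SA; have [X [SX HX]] := Sreg A SA.
  exists X; split => //; apply: idem_eq => //; try by apply: Smul.
    by rewrite mulmxA HX.
  by rewrite -mulmxA (mulmxA A) HX.
have EA : forall A, S A -> E *m A = A /\ A *m E = A.
  move=> A SA; have [X [SX AX XA HX]] := key A SA.
  split; first by rewrite -AX.
  by rewrite -XA mulmxA.
exists E; split => //.
  by move=> A SA; have [X [SX AX XA _]] := key A SA; exists X.
move=> A B SA SB.
have [a Ha] := @rank1_sandwich _ _ E A (Srk E SE).
have [b Hb] := @rank1_sandwich _ _ E B (Srk E SE).
rewrite (proj1 (EA A SA)) (proj2 (EA A SA)) in Ha.
rewrite (proj1 (EA B SB)) (proj2 (EA B SB)) in Hb.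
rewrite Ha Hb -!scalemxAl -!scalemxAr !scalerA EE.
by rewrite mulrC.
Qed.
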